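(* Fix $n\in\mathbb N$ and let $c^1\to c^2\to\dots\to c^k$ be a sequence of PSSPM transitions between configurations reachable in PSSPM from $(\underline{n})$. Suppose there is a column $i$ such that (1) for all $1\le t\le k$, $c^t_i=\max_j c^t_j$, and (2) $c^1_i\le c^1_{i+1}+2$. Then for all $1\le t\le k$, $c^t_i\le c^t_{i+1}+2$. Symmetrically, if (1) holds and $c^1_{i-1}+2\ge c^1_i$, then for all $1\le t\le k$, $c^t_{i-1}+2\ge c^t_i$.
   Context: A configuration is a sequence $(c_i)_{i\in\mathbb Z}$ of nonnegative integers with only finitely many positive values; $(\underline{n})$ denotes the configuration with $c_0=n$ and $c_i=0$ otherwise. Rule $\mathcal L$ at column $i$ is applicable if $c_{i-1}+2\le c_i$ and moves one grain from column $i$ to column $i-1$; rule $\mathcal R$ at column $i$ is applicable if $c_i\ge c_{i+1}+2$ and moves one grain from column $i$ to column $i+1$. A PSSPM transition $c\to c'$ applies rules simultaneously on every column where some rule is applicable, at most one rule per column (when both are applicable on a column, one is chosen). A configuration is reachable in PSSPM from $(\underline{n})$ if obtained from it by finitely many PSSPM transitions. *)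

(* Defs.v *)
From Stdlib Require Import ZArith Arith Lia.
Open Scope Z_scope.

Definition config := Z -> nat.

Definition finite_support (c : config) : Prop :=
  exists N : Z, forall i : Z, N < Z.abs i -> c i = 0%nat.

Definition single (n : nat) : config := fun i => if Z.eqb i 0 then n else 0%nat.

Definition L_app (c : config) (i : Z) : Prop := (c (i - 1)%Z + 2 <= c i)%nat.
Definition R_app (c : config) (i : Z) : Prop := (c (i + 1)%Z + 2 <= c i)%nat.

Inductive rule := RL | RR.

Definition valid_choice (c : config) (ch : Z -> option rule) : Prop :=
  forall i : Z,
    (ch i = Some RL -> L_app c i) /\
    (ch i = Some RR -> R_app c i) /\
    (ch i = None -> ~ L_app c i /\ ~ R_app c i).

Definition fires (o : option rule) : nat := match o with None => 0%nat | Some _ => 1%nat end.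
Definition is_L (o : option rule) : nat := match o with Some RL => 1%nat | _ => 0%nat end.
Definition is_R (o : option rule) : nat := match o with Some RR => 1%nat | _ => 0%nat end.

Definition apply_choice (c : config) (ch : Z -> option rule) : config :=
  fun i => Nat.add (Nat.add (Nat.sub (c i) (fires (ch i))) (is_L (ch (i + 1)))) (is_R (ch (i - 1))).

Definition psspm_step (c c' : config) : Prop :=
  exists ch : Z -> option rule, valid_choice c ch /\ forall i, c' i = apply_choice c ch i.

Inductive reachable (n : nat) : config -> Prop :=
| reach_init : reachable n (single n)
| reach_step : forall c c', reachable n c -> psspm_step c c' -> reachable n c'.

(* Main.v *)
Require Import Defs.
From Stdlib Require Import ZArith Arith Lia.
Open Scope Z_scope.

Lemma stepR (c c' : config) (i : Z) :
  (forall j : Z, (c j <= c i)%nat) -> (c i <= c (i + 1)%Z + 2)%nat ->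
  psspm_step c c' -> (c' i <= c' (i + 1)%Z + 2)%nat.
Proof.
  intros Hm Hb [ch [Hv He]].
  rewrite !He. unfold apply_choice.
  replace (i + 1 - 1) with i by lia.
  replace (i + 1 + 1) with (i + 2) by lia.
  pose proof (Hm (i+1)) as H1. pose proof (Hm (i-1)) as H2.
  destruct (Hv i) as [Ai [Bi Ci]].
  destruct (Hv (i+1)) as [A1 [B1 C1]].
  destruct (Hv (i-1)) as [A2 [B2 C2]].
  unfold L_app, R_app in *.
  replace (i + 1 - 1) with i in A1 by lia.
  replace (i - 1 + 1) with i in B2 by lia.
  destruct (ch i) as [[|]|]; destruct (ch (i+1)) as [[|]|];
  destruct (ch (i-1)) as [[|]|]; destruct (ch (i+2)) as [[|]|]; simpl;
  try (specialize (A1 eq_refl)); try (specialize (B2 eq_refl));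
  try (destruct (Ci eq_refl)); try lia.
Qed.

Lemma stepL (c c' : config) (i : Z) :
  (forall j : Z, (c j <= c i)%nat) -> (c i <= c (i - 1)%Z + 2)%nat ->
  psspm_step c c' -> (c' i <= c' (i - 1)%Z + 2)%nat.
Proof.
  intros Hm Hb [ch [Hv He]].
  rewrite !He. unfold apply_choice.
  replace (i - 1 + 1) with i by lia.
  replace (i - 1 - 1) with (i - 2) by lia.
  pose proof (Hm (i+1)) as H1. pose proof (Hm (i-1)) as H2.
  destruct (Hv i) as [Ai [Bi Ci]].
  destruct (Hv (i+1)) as [A1 [B1 C1]].
  destruct (Hv (i-1)) as [A2 [B2 C2]].
  unfold L_app, R_app in *.
  replace (i + 1 - 1) with i in A1 by lia.
  replace (i - 1 + 1) with i in B2 by lia.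
  destruct (ch i) as [[|]|]; destruct (ch (i+1)) as [[|]|];
  destruct (ch (i-1)) as [[|]|]; destruct (ch (i-2)) as [[|]|]; simpl;
  try (specialize (A1 eq_refl)); try (specialize (B2 eq_refl));
  try (destruct (Ci eq_refl)); try lia.
Qed.

Theorem lemma1 (n : nat) (k : nat) (c : nat -> config) (i : Z) :
  (forall t : nat, (1 <= t <= k)%nat -> reachable n (c t)) ->
  (forall t : nat, (1 <= t < k)%nat -> psspm_step (c t) (c (S t))) ->
  (forall t : nat, (1 <= t <= k)%nat -> forall j : Z, (c t j <= c t i)%nat) ->
  ((c 1%nat i <= c 1%nat (i + 1)%Z + 2)%nat ->
     forall t : nat, (1 <= t <= k)%nat -> (c t i <= c t (i + 1)%Z + 2)%nat) /\
  ((c 1%nat i <= c 1%nat (i - 1)%Z + 2)%nat ->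
     forall t : nat, (1 <= t <= k)%nat -> (c t i <= c t (i - 1)%Z + 2)%nat).
Proof.
  intros _ Hs Hm. split; intros H0 t [Ht1 Htk].
  - induction t as [|t IH]; [lia|].
    destruct (Nat.eq_dec t 0) as [->|Hn]; [exact H0|].
    apply (stepR (c t)); [apply Hm; lia | apply IH; lia | apply Hs; lia].
  - induction t as [|t IH]; [lia|].
    destruct (Nat.eq_dec t 0) as [->|Hn]; [exact H0|].
    apply (stepL (c t)); [apply Hm; lia | apply IH; lia | apply Hs; lia].
Qed.
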